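(* Assume $\kappa\ge\|f'\|_{C[-\beta,\beta]}$ and $\|\phi^0\|_\infty\le\beta$. If $$\tau_1\le\Big(\frac{4}{11\varsigma m(\kappa+4\varepsilon^2/h^2)\Gamma(2-\alpha)}\Big)^{1/\alpha},$$ then the $L2$-$1_\sigma$ first-step iterates satisfy $\|\hat\phi^1_{(s)}\|_\infty\le\beta$ for all $s\ge1$. If moreover $$\tau_1\le\Big(\frac{4}{11\kappa(1-\varsigma)m\Gamma(2-\alpha)}\Big)^{1/\alpha},$$ then the iterates converge in $\|\cdot\|_\infty$ to a solution $\hat\phi^1$ of the $L2$-$1_\sigma$ nonlinear first-step equation with $\|\hat\phi^1\|_\infty\le\beta$, and this is its unique solution with $\|\hat\phi^1\|_\infty\le\beta$.
   Context: Setting: $\Omega=(0,L)^2$ with periodic boundary conditions; constants $m>0$, $\varepsilon>0$, $\alpha\in(0,1)$, and $\varsigma:=\alpha/2$. The nonlinearity $f=-F'$ is one of: (double-well) $F(\phi)=\frac14(1-\phi^2)^2$, $f(\phi)=\phi-\phi^3$, with $\beta=1$; or (Flory–Huggins) $F(\phi)=\frac{\theta}{2}[(1+\phi)\ln(1+\phi)+(1-\phi)\ln(1-\phi)]-\frac{\theta_c}{2}\phi^2$, $f(\phi)=\frac{\theta}{2}\ln\frac{1-\phi}{1+\phi}+\theta_c\phi$ on $(-1,1)$, with $\theta_c>\theta>0$ and $\beta\in(0,1)$ the positive root of $f$. In both cases $f(\pm\beta)=0$. Spatial discretization: $M\in\mathbb N$, $h=L/M$; $\mathbb V_h$ is the space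 of real grid functions $v=\{v_{ij}\}_{i,j\in\mathbb Z}$ that are $M$-periodic in each index; $\|v\|_\infty=\max_{1\le i,j\le M}|v_{ij}|$; $\Delta_hv_{ij}=h^{-2}(v_{i+1,j}+v_{i-1,j}+v_{i,j+1}+v_{i,j-1}-4v_{ij})$. Scalar functions act on grid functions pointwise. Time grid $0=t_0<t_1$, $\tau_1=t_1$; $\omega_\mu(t)=t^{\mu-1}/\Gamma(\mu)$. Constant $\kappa\ge0$; $\phi^0\in\mathbb V_h$. First step of the $L2$-$1_\sigma$ schemes: $B^{(1)}_0=\frac1{\tau_1}\int_{0}^{t_{1-\varsigma}}\omega_{1-\alpha}(t_{1-\varsigma}-s)\,ds=\frac{(1-\varsigma)^{1-\alpha}}{\Gamma(2-\alpha)\tau_1^\alpha}$ with $t_{1-\varsigma}=(1-\varsigma)t_1$. The nonlinear first-step equation for $\hat\phi^1\in\mathbb V_h$ is $B^{(1)}_0(\hat\phi^1-\phi^0)=m(\varepsilon^2\Delta_h\hat\phi^{1-\varsigma}+f(\hat\phi^{1-\varsigma}))$ with $\hat\phi^{1-\varsigma}=(1-\varsigma)\hat\phi^1+\varsigma\phi^0$. The first-step iteration is $\hat\phi^1_{(0)}=\phi^0$ and, for $s\ge1$, $B^{(1)}_0(\hat\phi^1_{(s)}-\phi^0)=m(\varepsilon^2\Delta_h\hat\phi^{1-\varsigma}_{(s)}+f(\hat\phi^{1-\varsigma}_{(s-1)})-\kappa(\hat\phi^{1-\varsigma}_{(s)}-\hat\phi^{1-\varsigma}_{(s-1)}))$,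 where $\hat\phi^{1-\varsigma}_{(\ell)}=(1-\varsigma)\hat\phi^1_{(\ell)}+\varsigma\phi^0$. *)

(* Defs.v *)
From HB Require Import structures.
From mathcomp Require Import all_boot all_order all_algebra.
From mathcomp Require Import all_classical all_reals all_analysis.
Set Implicit Arguments. Unset Strict Implicit. Unset Printing Implicit Defensive.
Import Order.TTheory GRing.Theory Num.Theory.
Import numFieldNormedType.Exports.
Local Open Scope classical_set_scope.
Local Open Scope ring_scope.

Definition Gamma {R : realType} (x : R) : R :=
  fine (\int[(@lebesgue_measure R)]_(t in `]0%R, +oo[%classic)
          ((t `^ (x - 1)) * expR (- t))%:E)%E.

Definition grid (R : realType) := int -> int -> R.

Definition grid_periodic {R : realType} (M : nat) (v : grid R) : Prop :=
  forall i j : int, v (i + M%:Z) j = v i j /\ v i (j + M%:Z) = v i j.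

Definition normInf {R : realType} (M : nat) (v : grid R) : R :=
  \big[Num.max/0]_(i < M) \big[Num.max/0]_(j < M)
     `| v (i.+1)%:Z (j.+1)%:Z |.

Definition lap {R : realType} (h : R) (v : grid R) : grid R :=
  fun i j => (v (i + 1) j + v (i - 1) j + v i (j + 1) + v i (j - 1)
              - 4 * v i j) / h ^+ 2.

(* The two admissible nonlinearities f = -F' (with their derivative f'). *)
Inductive nonlin := DoubleWell | FloryHuggins.

Definition fnl {R : realType} (c : nonlin) (theta thetac : R) (x : R) : R :=
  match c with
  | DoubleWell => x - x ^+ 3
  | FloryHuggins => theta / 2 * ln ((1 - x) / (1 + x)) + thetac * x
  end.

Definition dfnl {R : realType} (c : nonlin) (theta thetac : R) (x : R) : R :=
  match c with
  | DoubleWell => 1 - 3 * x ^+ 2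
  | FloryHuggins => - theta / (1 - x ^+ 2) + thetac
  end.

Definition nonlin_ok {R : realType} (c : nonlin) (theta thetac beta : R) : Prop :=
  match c with
  | DoubleWell => beta = 1
  | FloryHuggins => 0 < theta /\ theta < thetac /\ 0 < beta /\ beta < 1 /\
                    fnl FloryHuggins theta thetac beta = 0
  end.

Definition B10 {R : realType} (alpha tau1 : R) : R :=
  let vs := alpha / 2 in
  (1 - vs) `^ (1 - alpha) / (Gamma (2 - alpha) * tau1 `^ alpha).

Definition first_step_eq {R : realType} (c : nonlin) (theta thetac m eps alpha tau1 h : R)
    (phi0 phi1 : grid R) : Prop :=
  let vs := alpha / 2 in
  let p := fun i j => (1 - vs) * phi1 i j + vs * phi0 i j in
  forall i j : int,
    B10 alpha tau1 * (phi1 i j - phi0 i j) =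
    m * (eps ^+ 2 * lap h p i j + fnl c theta thetac (p i j)).

Definition first_step_iter {R : realType} (c : nonlin) (theta thetac m eps alpha tau1 h kappa : R)
    (phi0 : grid R) (phi : nat -> grid R) : Prop :=
  let vs := alpha / 2 in
  let p := fun (l : nat) i j => (1 - vs) * phi l i j + vs * phi0 i j in
  phi 0%N = phi0 /\
  forall (s : nat) (i j : int), (1 <= s)%N ->
    B10 alpha tau1 * (phi s i j - phi0 i j) =
    m * (eps ^+ 2 * lap h (p s) i j + fnl c theta thetac (p s.-1 i j)
         - kappa * (p s i j - p s.-1 i j)).

(* Main.v *)
Require Import Defs.
From HB Require Import structures.
From mathcomp Require Import all_boot all_order all_algebra.
From mathcomp Require Import all_classical all_reals all_analysis.
From mathcomp Require Import measurable_realfun ring lra zify.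
Set Implicit Arguments. Unset Strict Implicit.
Import Order.TTheory GRing.Theory Num.Theory.
Import numFieldNormedType.Exports.
Local Open Scope classical_set_scope.
Local Open Scope ring_scope.

Lemma Gamma_gt0 (R : realType) (x : R) : 1 < x < 2 -> 0 < Gamma x.
Proof.
move=> /andP[x1 x2].
set g := fun t : R => t `^ (x - 1) * expR (- t).
have mg : measurable_fun setT g.
  apply: measurable_funM; first exact: measurable_powR.
  apply: measurableT_comp; first exact: measurable_expR.
  exact: measurable_funN.
have g0 t : 0 <= g t by rewrite /g mulr_ge0 ?powR_ge0 ?expR_ge0.
rewrite /Gamma.
set I := (\int[_]_(t in _) _)%E.
have Ilo : ((expR (-2))%:E <= I)%E.
  apply: (@le_trans _ _ (\int[lebesgue_measure]_(t in `[1%R, 2%R]%classic) (g t)%:E)%E); last first.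
    apply: ge0_subset_integral => //.
    - by apply/measurable_EFinP; apply: measurable_funS mg.
    - by move=> t _; rewrite lee_fin.
    - move=> t /=; rewrite !in_itv /= => /andP[t1 _]; rewrite andbT; exact: (lt_le_trans _ t1).
  apply: (@le_trans _ _ (\int[lebesgue_measure]_(t in `[1%R, 2%R]%classic) (cst (expR (-2))%:E) t)%E).
    rewrite integral_cst //.
    have L := @lebesgue_measure_itv R `[1%R, 2%R].
    rewrite /= ifT in L; last by rewrite lte_fin ltr1n.
    set mu := (X in (_ * X)%E).
    have -> : mu = 1%E by apply: (etrans L); rewrite -EFinD; congr EFin; lra.
    by rewrite mule1.
  apply: ge0_le_integral => //.
  - by move=> t _; rewrite lee_fin expR_ge0.
  - by apply/measurable_EFinP; apply: measurable_funS mg.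
  - move=> t /=; rewrite in_itv /= => /andP[t1 t2]; rewrite lee_fin /g.
    rewrite -[X in X <= _]mul1r; apply: ler_pM; rewrite ?ler01 ?expR_ge0 //.
      rewrite -[leLHS](powRr0 t); apply: ler_powR => //; lra.
    by rewrite ler_expR; lra.
have Iup : (I <= 4%:E)%E.
  apply: (@le_trans _ _ (\int[lebesgue_measure]_(t in `]0%R, +oo[%classic) (4%:E * (exponential_pdf (1/2) t)%:E))%E).
    apply: ge0_le_integral => //.
    - by move=> t _; rewrite lee_fin; exact: (g0 t).
    - by apply/measurable_EFinP; apply: measurable_funS mg.
    - apply: emeasurable_funM => //; apply/measurable_EFinP.
      exact: measurable_funS (measurable_exponential_pdf _).
    - move=> t /=; rewrite in_itv /= andbT => t0.
      rewrite exponential_pdfE; last exact: ltW. rewrite -EFinM lee_fin /g.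
      have h1 : t `^ (x - 1) <= 1 + t.
        have [t1|t1] := leP t 1.
          have : t `^ (x - 1) <= t `^ 0 by apply: ger_powR; rewrite ?t0 ?t1 //; lra.
          rewrite powRr0; lra.
        have := @ler1_powR _ t (x - 1) (ltW t1) ltac:(lra); lra.
      have h2 : 1 + t <= 2 * expR (t / 2).
        have := expR_ge1Dx (t / 2); lra.
      have e : expR (- t) = (expR (t / 2))^-1 * expR (- t / 2).
        by rewrite -expRN -expRD; congr expR; lra.
      rewrite e.
      have ep : 0 < expR (t / 2) by apply: expR_gt0.
      have eq2 : 4 * (1 / 2 * expR (- (1 / 2) * t)) = 2 * expR (- t / 2).
        by rewrite (_ : - (1/2) * t = - t / 2); [lra| lra].
      rewrite eq2 mulrA; apply: ler_wpM2r; first exact: expR_ge0.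
      rewrite ler_pdivrMr //.
      exact: le_trans h1 h2.
  rewrite ge0_integralZl_EFin //; last 2 first.
  - by move=> t _; rewrite lee_fin exponential_pdf_ge0.
  - apply/measurable_EFinP; exact: measurable_funS (measurable_exponential_pdf _).
  rewrite -[leRHS]mule1 lee_pmul2l ?lte_fin //.
  have E1 := @integral_exponential_pdf R (1/2) ltac:(lra).
  rewrite -E1.
  apply: ge0_subset_integral => //.
  - apply/measurable_EFinP; exact: measurable_funS (measurable_exponential_pdf _).
  - by move=> t _; rewrite lee_fin exponential_pdf_ge0.
have Ifin : I \is a fin_num.
  rewrite fin_numE; apply/andP; split; apply/negP => /eqP E; rewrite E in Ilo Iup => //.
have := Ilo; rewrite -(fineK Ifin) lee_fin => H.
by apply: lt_le_trans H; apply: expR_gt0.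
Qed.

Lemma is_derive_lncomp (R : realType) (q : R -> R) (x dq : R) :
  0 < q x -> is_derive x 1 q dq -> is_derive x 1 (fun y => ln (q y)) (dq / q x).
Proof.
move=> qx dqx.
have dq1 : derivable q x 1 by apply: ex_derive.
have dl : derivable (@ln R) (q x) 1 by apply: ex_derive; exact: is_derive1_ln.
have hc : derivable ((@ln R) \o q) x 1.
  apply/derivable1_diffP; apply: differentiable_comp; exact/derivable1_diffP.
apply: DeriveDef; first exact: hc.
have := derive1_comp dq1 dl; rewrite !derive1E => ->.
have [_ ->] := is_derive1_ln qx.
by rewrite derive_val mulrC.
Qed.

Lemma is_derive_inv1 (R : realType) (x : R) : 1 + x != 0 ->
  is_derive x 1 (fun y => (1 + y)^-1) (- (1 + x) ^- 2).
Proof.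
move=> hx.
have d : derivable (fun y : R => 1 + y) x 1.
  by apply: ex_derive; apply: is_deriveD.
apply: DeriveDef; first exact: derivableV.
rewrite deriveV //.
have -> : 'D_1 (fun y : R => 1 + y) x = 1.
  have H : is_derive x 1 (fun y : R => 1 + y) (0 + 1) by apply: is_deriveD.
  by have [_ ->] := H; rewrite add0r.
by rewrite /GRing.scale /= mulr1.
Qed.

Lemma dfnl_DW (R : realType) (t tc x : R) :
  is_derive x 1 (fnl DoubleWell t tc) (dfnl DoubleWell t tc x).
Proof.
rewrite /fnl /dfnl.
have h3 : is_derive x 1 (fun y : R => y ^+ 3) (3 * x ^+ 2).
  rewrite (_ : (fun y : R => y ^+ 3) = (@id R) ^+ 3); last first.
    by apply/funext=> y; rewrite exprfctE.
  have := @is_deriveX _ _ id 3 x 1 1 (is_derive_id x 1); move/is_derive_eq; apply.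
  by rewrite /GRing.scale /= mulr1.
have H : is_derive x 1 (fun y : R => y - y ^+ 3) (1 - 3 * x ^+ 2).
  by apply: is_deriveB.
exact: H.
Qed.

Lemma dfnl_FH (R : realType) (t tc x : R) : -1 < x < 1 ->
  is_derive x 1 (fnl FloryHuggins t tc) (dfnl FloryHuggins t tc x).
Proof.
move=> /andP[x1 x2].
have p1 : 1 + x != 0 by rewrite lt0r_neq0 //; lra.
have hi := @is_derive_inv1 R x p1.
have hl : is_derive x 1 (fun y : R => 1 - y) (0 - 1) by apply: is_deriveB.
have hq : is_derive x 1 (fun y : R => (1 - y) * (1 + y)^-1)
   ((1 - x) *: (- (1 + x) ^- 2) + (1 + x)^-1 *: (0 - 1)).
  have := is_deriveM hl hi; move/is_derive_eq; apply.
  by [].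
have qx : 0 < (1 - x) * (1 + x)^-1 by apply: divr_gt0; lra.
have hln := @is_derive_lncomp R (fun y => (1 - y) / (1 + y)) x _ qx hq.
have hs : is_derive x 1 (fun y : R => t / 2 * ln ((1 - y) * (1 + y)^-1))
    (t / 2 *: (((1 - x) *: (- (1 + x) ^- 2) + (1 + x)^-1 *: (0 - 1)) / ((1 - x) * (1 + x)^-1))).
  have := is_deriveZ (t / 2) hln; move/is_derive_eq; apply.
  by [].
have hc : is_derive x 1 (fun y : R => tc * y) (tc *: 1).
  have := is_deriveZ tc (is_derive_id x 1); move/is_derive_eq; apply.
  by [].
have := is_deriveD hs hc; rewrite /fnl /dfnl; move/is_derive_eq; apply.
rewrite /GRing.scale /= mulr1.
have p2 : 1 - x != 0 by rewrite lt0r_neq0 //; lra.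
have p3 : 1 - x ^+ 2 != 0 by rewrite lt0r_neq0 //; nra.
field.
by rewrite p1 p2 p3.
Qed.

Lemma fnl_deriv (R : realType) c (t tc beta x : R) : nonlin_ok c t tc beta ->
  -beta <= x <= beta -> is_derive x 1 (fnl c t tc) (dfnl c t tc x).
Proof.
case: c => /=.
  by move=> _ _; exact: dfnl_DW.
move=> [_ [_ [_ [b1 _]]]] /andP[h1 h2]; apply: dfnl_FH; apply/andP; split; lra.
Qed.

Lemma fnl_lip (R : realType) c (t tc beta kappa : R) : nonlin_ok c t tc beta ->
  (forall x, -beta <= x <= beta -> `| dfnl c t tc x | <= kappa) ->
  forall a b, -beta <= a <= beta -> -beta <= b <= beta ->
  `| fnl c t tc a - fnl c t tc b | <= kappa * `| a - b |.
Proof.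
move=> ok hk.
suff H : forall a b, a <= b -> -beta <= a <= beta -> -beta <= b <= beta ->
  `| fnl c t tc b - fnl c t tc a | <= kappa * `| b - a |.
  move=> a b ha hb; have [ab|ba] := leP a b.
    by rewrite distrC (distrC a); apply: H.
  by apply: H => //; exact: ltW.
move=> a b ab /andP[a1 a2] /andP[b1 b2].
have inab x : x \in `[a, b] -> -beta <= x <= beta.
  by rewrite in_itv /= => /andP[? ?]; apply/andP; split; lra.
have [x xab ->] := @MVT_segment R (fnl c t tc) (dfnl c t tc) a b ab
  (fun x hx => fnl_deriv ok (inab x (subset_itv_oo_cc hx)))
  (derivable_within_continuous (fun x hx => @ex_derive _ _ _ _ _ _ _ (fnl_deriv ok (inab x hx)))).
rewrite normrM ler_wpM2r //; exact: hk (inab x xab).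
Qed.

Lemma fnl_beta (R : realType) c (t tc beta : R) : nonlin_ok c t tc beta ->
  0 < beta /\ fnl c t tc beta = 0 /\ fnl c t tc (- beta) = 0.
Proof.
case: c => /=.
  by move=> ->; split; [lra|split; ring].
move=> [t0 [_ [b0 [b1 fb]]]]; split => //; split => //.
move: fb; rewrite /fnl => fb.
have -> : (1 - - beta) / (1 + - beta) = ((1 - beta) / (1 + beta))^-1.
  by rewrite invf_div; congr (_ / _); lra.
rewrite lnV; last by rewrite posrE divr_gt0 //; lra.
lra.
Qed.

Lemma per_shift (R : realType) M (v : grid R) : grid_periodic M v ->
  forall (k : int) i j, v (i + k * M%:Z) j = v i j /\ v i (j + k * M%:Z) = v i j.
Proof.
move=> hp.
have pos : forall (n : nat) i j, v (i + n%:Z * M%:Z) j = v i j /\ v i (j + n%:Z * M%:Z) = v i j.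
  elim=> [|n IH] i j; first by rewrite !mul0r !addr0.
  rewrite -addn1 PoszD mulrDl mul1r !addrA.
  by rewrite (hp _ _).1 (hp _ _).2 (IH i j).1 (IH i j).2.
case=> [n|n] i j; first exact: pos.
rewrite NegzE mulNr.
have h1 := (pos n.+1 (i - n.+1%:Z * M%:Z) j).1.
have h2 := (pos n.+1 i (j - n.+1%:Z * M%:Z)).2.
rewrite subrK in h1; rewrite subrK in h2.
by split.
Qed.

Lemma per_red (R : realType) M (v : grid R) : grid_periodic M v -> (0 < M)%N ->
  forall i j, exists (a b : 'I_M), v i j = v (a.+1)%:Z (b.+1)%:Z.
Proof.
move=> hp M0 i j.
have red : forall x : int, exists (a : 'I_M) (k : int), x = (a.+1)%:Z + k * M%:Z.
  move=> x.
  have Mn0 : (M%:Z != 0) by rewrite eqz_nat -lt0n.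
  have r0 := modz_ge0 (x - 1) Mn0.
  have rM := ltz_pmod (x - 1) (ltac:(by rewrite ltz_nat) : (0 < M%:Z)%R).
  case E: ((x - 1) %% M%:Z)%Z r0 rM => [r|r] // _ rlt.
  have rlt' : (r < M)%N by rewrite -ltz_nat.
  exists (Ordinal rlt'), ((x - 1) %/ M%:Z)%Z => /=.
  have := divz_eq (x - 1) M%:Z; rewrite E => e.
  rewrite -addn1 PoszD; lia.
have [a [k ->]] := red i; have [b [l ->]] := red j.
exists a, b.
by rewrite (per_shift hp k _ _).1 (per_shift hp l _ _).2.
Qed.

Lemma normInf_ge (R : realType) M (v : grid R) : grid_periodic M v -> (0 < M)%N ->
  forall i j, `|v i j| <= normInf M v.
Proof.
move=> hp M0 i j; have [a [b ->]] := per_red hp M0 i j.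
rewrite /normInf.
apply: le_trans (le_bigmax _ _ a).
exact: (le_bigmax _ (fun b : 'I_M => `|v (a.+1)%:Z (b.+1)%:Z|) b).
Qed.

Lemma normInf_le (R : realType) M (v : grid R) (c : R) : 0 <= c ->
  (forall i j, `|v i j| <= c) -> normInf M v <= c.
Proof.
move=> c0 h; rewrite /normInf; apply: bigmax_le => // a _.
by apply: bigmax_le => // b _.
Qed.

Lemma normInf_ge0 (R : realType) M (v : grid R) : 0 <= normInf M v.
Proof.
rewrite /normInf; elim/big_ind: _ => //.
  by move=> x y hx hy; rewrite le_max hx.
move=> a _; elim/big_ind: _ => //.
by move=> x y hx hy; rewrite le_max hx.
Qed.

Lemma absP (R : realDomainType) (x c : R) : `|x| <= c -> x <= c /\ - x <= c.
Proof. by rewrite ler_norml => /andP[h1 h2]; split; lra. Qed.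

Lemma mulbnd (R : realDomainType) (k x c : R) : 0 <= k -> `|x| <= c -> k * x <= k * c /\ - (k * x) <= k * c.
Proof.
move=> k0 /absP [h1 h2]; split; first exact: ler_wpM2l.
by rewrite -mulrN; apply: ler_wpM2l.
Qed.

Lemma step_bound (R : realFieldType) (B m a vs kappa beta N U z0 z1 z2 z3 z4 u1 u2 u3 u4 G : R) :
  0 < m -> 0 <= a -> 0 <= kappa -> 0 < vs -> vs < 1 -> 0 <= beta ->
  m * vs * (kappa + 4 * a) <= B ->
  `|z0| <= beta -> `|z1| <= beta -> `|z2| <= beta -> `|z3| <= beta -> `|z4| <= beta ->
  `|u1| <= N -> `|u2| <= N -> `|u3| <= N -> `|u4| <= N -> `|G| <= kappa * beta ->
  B * (U - z0) = m * (a * ((1 - vs) * u1 + vs * z1 + ((1 - vs) * u2 + vs * z2)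
       + ((1 - vs) * u3 + vs * z3) + ((1 - vs) * u4 + vs * z4) - 4 * ((1 - vs) * U + vs * z0))
       + G - kappa * ((1 - vs) * U + vs * z0)) ->
  (B + m * (1 - vs) * (kappa + 4 * a)) * `|U| <= (B + m * (1 - vs) * kappa) * beta + 4 * (m * a * (1 - vs)) * N.
Proof.
move=> m0 a0 k0 v0 v1 b0 hB hz0 hz1 hz2 hz3 hz4 hu1 hu2 hu3 hu4 hG e.
have K0 : 0 <= B - m * vs * (kappa + 4 * a) by lra.
have A0 : 0 <= m * a * (1 - vs) by rewrite mulr_ge0 ?mulr_ge0 //; lra.
have A'0 : 0 <= m * a * vs by rewrite mulr_ge0 ?mulr_ge0 //; lra.
have [k1 k2] := mulbnd K0 hz0.
have [a1 a2] := mulbnd A0 hu1. have [a3 a4] := mulbnd A0 hu2.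
have [a5 a6] := mulbnd A0 hu3. have [a7 a8] := mulbnd A0 hu4.
have [b1 b2] := mulbnd A'0 hz1. have [b3 b4] := mulbnd A'0 hz2.
have [b5 b6] := mulbnd A'0 hz3. have [b7 b8] := mulbnd A'0 hz4.
have [g1 g2] := mulbnd (ltW m0) hG.
have [U0|U0] := leP 0 U.
  rewrite ger0_norm //; lra.
rewrite ltr0_norm //; lra.
Qed.

Lemma step_contr (R : realFieldType) (B m a vs kappa N W U U' z0 z1 z2 z3 z4 u1 u2 u3 u4 u1' u2' u3' u4' G G' : R) :
  0 < m -> 0 <= a -> 0 < vs -> vs < 1 ->
  `|u1 - u1'| <= N -> `|u2 - u2'| <= N -> `|u3 - u3'| <= N -> `|u4 - u4'| <= N -> `|G - G'| <= W ->
  B * (U - z0) = m * (a * ((1 - vs) * u1 + vs * z1 + ((1 - vs) * u2 + vs * z2)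
       + ((1 - vs) * u3 + vs * z3) + ((1 - vs) * u4 + vs * z4) - 4 * ((1 - vs) * U + vs * z0))
       + G - kappa * ((1 - vs) * U + vs * z0)) ->
  B * (U' - z0) = m * (a * ((1 - vs) * u1' + vs * z1 + ((1 - vs) * u2' + vs * z2)
       + ((1 - vs) * u3' + vs * z3) + ((1 - vs) * u4' + vs * z4) - 4 * ((1 - vs) * U' + vs * z0))
       + G' - kappa * ((1 - vs) * U' + vs * z0)) ->
  (B + m * (1 - vs) * (kappa + 4 * a)) * `|U - U'| <= 4 * (m * a * (1 - vs)) * N + m * W.
Proof.
move=> m0 a0 v0 v1 hu1 hu2 hu3 hu4 hG e e'.
have A0 : 0 <= m * a * (1 - vs) by rewrite mulr_ge0 ?mulr_ge0 //; lra.
have [a1 a2] := mulbnd A0 hu1. have [a3 a4] := mulbnd A0 hu2.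
have [a5 a6] := mulbnd A0 hu3. have [a7 a8] := mulbnd A0 hu4.
have [g1 g2] := mulbnd (ltW m0) hG.
have [U0|U0] := leP 0 (U - U').
  rewrite ger0_norm //; lra.
rewrite ltr0_norm //; lra.
Qed.

Lemma resid (R : realFieldType) (B m a vs kappa rho rho' U V W z0 z1 z2 z3 z4 u1 u2 u3 u4 v1 v2 v3 v4 F F' : R) :
  0 < m -> 0 <= a -> 0 <= kappa -> 0 < vs -> vs < 1 -> 0 <= B ->
  `|U - V| <= rho -> `|u1 - v1| <= rho -> `|u2 - v2| <= rho -> `|u3 - v3| <= rho -> `|u4 - v4| <= rho ->
  `|V - W| <= rho + rho' -> `|F - F'| <= kappa * (1 - vs) * rho' ->
  B * (V - z0) = m * (a * ((1 - vs) * v1 + vs * z1 + ((1 - vs) * v2 + vs * z2)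
       + ((1 - vs) * v3 + vs * z3) + ((1 - vs) * v4 + vs * z4) - 4 * ((1 - vs) * V + vs * z0))
       + (F' + kappa * ((1 - vs) * W + vs * z0)) - kappa * ((1 - vs) * V + vs * z0)) ->
  `|B * (U - z0) - m * (a * ((1 - vs) * u1 + vs * z1 + ((1 - vs) * u2 + vs * z2)
       + ((1 - vs) * u3 + vs * z3) + ((1 - vs) * u4 + vs * z4) - 4 * ((1 - vs) * U + vs * z0)) + F)|
  <= B * rho + 8 * (m * a * (1 - vs)) * rho + 2 * (m * kappa * (1 - vs)) * (rho + rho').
Proof.
move=> m0 a0 k0 v0 vv1 B0 hU h1 h2 h3 h4 hV hF e.
have A0 : 0 <= m * a * (1 - vs) by rewrite mulr_ge0 ?mulr_ge0 //; lra.
have C0 : 0 <= m * kappa * (1 - vs) by rewrite mulr_ge0 ?mulr_ge0 //; lra.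
have [c1 c2] := mulbnd B0 hU.
have [d1 d2] := mulbnd A0 hU.
have [a1 a2] := mulbnd A0 h1. have [a3 a4] := mulbnd A0 h2.
have [a5 a6] := mulbnd A0 h3. have [a7 a8] := mulbnd A0 h4.
have [g1 g2] := mulbnd (ltW m0) hF.
have [w1 w2] := mulbnd C0 hV.
have rh : 0 <= rho by apply: le_trans hU.
have Crh : 0 <= m * kappa * (1 - vs) * rho by apply: mulr_ge0.
rewrite ler_norml; apply/andP; split; lra.
Qed.

Lemma tau_pow (R : realType) (al tau X : R) : 0 < al -> 0 < tau -> 0 < X ->
  tau <= X `^ (1 / al) -> tau `^ al <= X.
Proof.
move=> a0 t0 X0 h.
have := @ge0_ler_powR R al (ltW a0) tau (X `^ (1 / al)).
rewrite !nnegrE => /(_ (ltW t0) (powR_ge0 _ _) h).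
by rewrite -powRrM (_ : 1 / al * al = 1) ?powRr1 ?(ltW X0) //; field; rewrite gt_eqF.
Qed.

Lemma tau_bound (R : realType) (al tau D Gm P : R) : 0 < al -> 0 < tau -> 0 < D -> 0 < Gm ->
  0 <= P -> tau <= (4 / D) `^ (1 / al) -> P * D / (4 * Gm) <= P / (Gm * tau `^ al).
Proof.
move=> a0 t0 D0 G0 P0 h.
have T0 : 0 < tau `^ al := powR_gt0 _ t0.
have T1 := tau_pow a0 t0 (divr_gt0 (ltr0n _ 4) D0) h.
set T := tau `^ al in T0 T1 *.
have -> : P * D / (4 * Gm) = P / (Gm * T) * (D * T / 4).
  field; rewrite !gt_eqF //.
apply: ler_piMr; first by apply: divr_ge0 => //; apply: mulr_ge0; apply: ltW.
rewrite ler_pdivrMr //; rewrite ler_pdivlMr // in T1; lra.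
Qed.

Lemma P_bound (R : realType) (al : R) : 0 < al -> al < 1 ->
  1 / 2 <= (1 - al / 2) `^ (1 - al).
Proof.
move=> a0 a1.
have h : 1 - al / 2 <= (1 - al / 2) `^ (1 - al).
  apply: ger1_powR; last lra.
  apply/andP; split; lra.
lra.
Qed.

Section G.
Variable R : realType.

Lemma gbound (f : R -> R) (kappa beta p : R) : 0 <= kappa ->
  (forall a b, `|a| <= beta -> `|b| <= beta -> `|f a - f b| <= kappa * `|a - b|) ->
  f beta = 0 -> f (- beta) = 0 -> `|p| <= beta -> `|f p + kappa * p| <= kappa * beta.
Proof.
move=> k0 fl fb fnb hp.
have b0 : 0 <= beta := le_trans (normr_ge0 _) hp.
have hb : `|beta| <= beta by rewrite ger0_norm.
have hnb : `|- beta| <= beta by rewrite normrN ger0_norm.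
have /absP [u1 u2] := fl _ _ hp hb.
have /absP [l1 l2] := fl _ _ hp hnb.
move: hp; rewrite ler_norml => /andP [p1 p2].
rewrite distrC (ger0_norm (_ : 0 <= beta - p)) in u1 u2; last lra.
rewrite (ger0_norm (_ : 0 <= p - - beta)) in l1 l2; last lra.
rewrite fb in u1 u2; rewrite fnb in l1 l2.
rewrite ler_norml; apply/andP; split; nra.
Qed.

Lemma glip (f : R -> R) (kappa beta a b : R) : 0 <= kappa ->
  (forall a b, `|a| <= beta -> `|b| <= beta -> `|f a - f b| <= kappa * `|a - b|) ->
  `|a| <= beta -> `|b| <= beta ->
  `|(f a + kappa * a) - (f b + kappa * b)| <= 2 * kappa * `|a - b|.
Proof.
move=> k0 fl ha hb.
have := fl _ _ ha hb => h.
rewrite (_ : _ - _ = (f a - f b) + kappa * (a - b)); last ring.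
apply: le_trans (ler_normD _ _) _.
rewrite normrM (ger0_norm k0); lra.
Qed.

Definition stepeq (B m e h kappa vs : R) (f : R -> R) (z u w : grid R) :=
  forall i j, B * (u i j - z i j) =
    m * (e ^+ 2 * lap h (fun i j => (1 - vs) * u i j + vs * z i j) i j
         + f ((1 - vs) * w i j + vs * z i j)
         - kappa * ((1 - vs) * u i j + vs * z i j - ((1 - vs) * w i j + vs * z i j))).

Lemma stepeq_form (B m e h kappa vs : R) f z u w i j : h != 0 ->
  stepeq B m e h kappa vs f z u w ->
  B * (u i j - z i j) = m * (e ^+ 2 / h ^+ 2 * (
   (1 - vs) * u (i + 1)%R j + vs * z (i + 1)%R j + ((1 - vs) * u (i - 1)%R j + vs * z (i - 1)%R j)
       + ((1 - vs) * u i (j + 1)%R + vs * z i (j + 1)%R) + ((1 - vs) * u i (j - 1)%R + vs * z i (j - 1)%R)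
       - 4 * ((1 - vs) * u i j + vs * z i j))
       + (f ((1 - vs) * w i j + vs * z i j) + kappa * ((1 - vs) * w i j + vs * z i j))
       - kappa * ((1 - vs) * u i j + vs * z i j)).
Proof.
move=> h0 H; rewrite H /lap.
field.
by [].
Qed.


Lemma per_sub M (u v : grid R) : grid_periodic M u -> grid_periodic M v ->
  grid_periodic M (fun i j => u i j - v i j).
Proof.
move=> hu hv i j; split; by rewrite /= ?(hu i j).1 ?(hv i j).1 ?(hu i j).2 ?(hv i j).2.
Qed.

Lemma Qbound (vs beta w z : R) : 0 < vs -> vs < 1 -> `|w| <= beta -> `|z| <= beta ->
  `|(1 - vs) * w + vs * z| <= beta.
Proof.
move=> v0 v1 hw hz; apply: le_trans (ler_normD _ _) _.
rewrite !normrM (ger0_norm (_ : 0 <= vs)) ?(ger0_norm (_ : 0 <= 1 - vs)); [|lra|lra].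
have : (1 - vs) * `|w| <= (1 - vs) * beta by apply: ler_wpM2l; lra.
have : vs * `|z| <= vs * beta by apply: ler_wpM2l; lra.
lra.
Qed.

Lemma grid_bound (M : nat) (B m e h kappa vs beta : R) (f : R -> R) (z u w : grid R) :
  (0 < M)%N -> 0 < m -> 0 < h -> 0 <= kappa -> 0 < vs -> vs < 1 -> 0 <= beta -> 0 < B ->
  m * vs * (kappa + 4 * (e ^+ 2 / h ^+ 2)) <= B ->
  (forall a b, `|a| <= beta -> `|b| <= beta -> `|f a - f b| <= kappa * `|a - b|) ->
  f beta = 0 -> f (- beta) = 0 ->
  grid_periodic M u -> (forall i j, `|z i j| <= beta) -> (forall i j, `|w i j| <= beta) ->
  stepeq B m e h kappa vs f z u w -> normInf M u <= beta.
Proof.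
move=> M0 m0 h0 k0 v0 v1 b0 B0 hB fl fb fnb pu hz hw H.
have hn0 : h != 0 by rewrite gt_eqF.
set a := e ^+ 2 / h ^+ 2.
have a0 : 0 <= a by rewrite /a divr_ge0 ?sqr_ge0.
set N := normInf M u.
have hN i j : `|u i j| <= N := normInf_ge pu M0 i j.
have pt : forall i j, (B + m * (1 - vs) * (kappa + 4 * a)) * `|u i j| <=
    (B + m * (1 - vs) * kappa) * beta + 4 * (m * a * (1 - vs)) * N.
  move=> i j.
  have E := stepeq_form i j hn0 H.
  apply: (step_bound m0 a0 k0 v0 v1 b0 hB _ _ _ _ _ _ _ _ _ _ E) => //.
  apply: gbound => //; exact: Qbound.
have mck : 0 <= m * (1 - vs) * kappa by rewrite !mulr_ge0 //; lra.
have mac : 0 <= m * a * (1 - vs) by apply: mulr_ge0; [apply: mulr_ge0 => //; exact: ltW | lra].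
have X0 : 0 < B + m * (1 - vs) * kappa by lra.
have den0 : 0 < B + m * (1 - vs) * (kappa + 4 * a).
  have : m * (1 - vs) * (kappa + 4 * a) = m * (1 - vs) * kappa + 4 * (m * a * (1 - vs)) by ring.
  lra.
have N0 : 0 <= N := normInf_ge0 M u.
have : N <= ((B + m * (1 - vs) * kappa) * beta + 4 * (m * a * (1 - vs)) * N) /
            (B + m * (1 - vs) * (kappa + 4 * a)).
  have t1 : 0 <= (B + m * (1 - vs) * kappa) * beta by apply: mulr_ge0 => //; exact: ltW.
  have t2 : 0 <= 4 * (m * a * (1 - vs)) * N by apply: mulr_ge0 => //; apply: mulr_ge0.
  apply: normInf_le; first by apply: divr_ge0; lra.
  by move=> i j; rewrite ler_pdivlMr // mulrC.
rewrite ler_pdivlMr // => HN.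
have e1 : N * (B + m * (1 - vs) * (kappa + 4 * a)) =
   N * (B + m * (1 - vs) * kappa) + 4 * (m * a * (1 - vs)) * N by ring.
rewrite e1 in HN.
rewrite -(ler_pM2r X0); lra.
Qed.


Lemma grid_contr (M : nat) (B m e h kappa vs beta : R) (f : R -> R) (z u w u' w' : grid R) :
  (0 < M)%N -> 0 < m -> 0 < h -> 0 <= kappa -> 0 < vs -> vs < 1 -> 0 < B ->
  (forall a b, `|a| <= beta -> `|b| <= beta -> `|f a - f b| <= kappa * `|a - b|) ->
  grid_periodic M u -> grid_periodic M u' -> grid_periodic M w -> grid_periodic M w' ->
  (forall i j, `|w i j| <= beta) -> (forall i j, `|w' i j| <= beta) ->
  (forall i j, `|z i j| <= beta) ->
  stepeq B m e h kappa vs f z u w -> stepeq B m e h kappa vs f z u' w' ->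
  (B + m * (1 - vs) * kappa) * normInf M (fun i j => u i j - u' i j) <=
  2 * m * kappa * (1 - vs) * normInf M (fun i j => w i j - w' i j).
Proof.
move=> M0 m0 h0 k0 v0 v1 B0 fl pu pu' pw pw' hw hw' hz H H'.
have hn0 : h != 0 by rewrite gt_eqF.
set a := e ^+ 2 / h ^+ 2.
have a0 : 0 <= a by rewrite /a divr_ge0 ?sqr_ge0.
set N := normInf M (fun i j => u i j - u' i j).
set Nw := normInf M (fun i j => w i j - w' i j).
have pd := per_sub pu pu'.
have hN i j : `|u i j - u' i j| <= N := normInf_ge pd M0 i j.
have hNw i j : `|w i j - w' i j| <= Nw := normInf_ge (per_sub pw pw') M0 i j.
have pt : forall i j, (B + m * (1 - vs) * (kappa + 4 * a)) * `|u i j - u' i j| <=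
    4 * (m * a * (1 - vs)) * N + m * (2 * kappa * (1 - vs) * Nw).
  move=> i j.
  have E := stepeq_form i j hn0 H.
  have E' := stepeq_form i j hn0 H'.
  apply: (step_contr m0 a0 v0 v1 _ _ _ _ _ E E') => //.
  apply: le_trans (glip k0 fl (Qbound v0 v1 (hw i j) (hz i j)) (Qbound v0 v1 (hw' i j) (hz i j))) _.
  rewrite (_ : _ - _ = (1 - vs) * (w i j - w' i j)); last ring.
  rewrite normrM ger0_norm; last lra.
  rewrite -[in leRHS]mulrA; apply: ler_wpM2l; first by rewrite mulr_ge0.
  by apply: ler_wpM2l; [lra|].
have mck : 0 <= m * (1 - vs) * kappa by rewrite !mulr_ge0 //; lra.
have mac : 0 <= m * a * (1 - vs) by apply: mulr_ge0; [apply: mulr_ge0 => //; exact: ltW | lra].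
have X0 : 0 < B + m * (1 - vs) * kappa by lra.
have den0 : 0 < B + m * (1 - vs) * (kappa + 4 * a).
  have : m * (1 - vs) * (kappa + 4 * a) = m * (1 - vs) * kappa + 4 * (m * a * (1 - vs)) by ring.
  lra.
have N0 : 0 <= N := normInf_ge0 M _.
have Nw0 : 0 <= Nw := normInf_ge0 M _.
have : N <= (4 * (m * a * (1 - vs)) * N + m * (2 * kappa * (1 - vs) * Nw)) /
            (B + m * (1 - vs) * (kappa + 4 * a)).
  have t1 : 0 <= m * (2 * kappa * (1 - vs) * Nw).
    apply: mulr_ge0; first exact: ltW.
    apply: mulr_ge0 => //; apply: mulr_ge0; [apply: mulr_ge0 => //| lra].
  have t2 : 0 <= 4 * (m * a * (1 - vs)) * N by apply: mulr_ge0 => //; apply: mulr_ge0.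
  apply: normInf_le; first by apply: divr_ge0; lra.
  by move=> i j; rewrite ler_pdivlMr // mulrC.
rewrite ler_pdivlMr // => HN.
have e1 : N * (B + m * (1 - vs) * (kappa + 4 * a)) =
   N * (B + m * (1 - vs) * kappa) + 4 * (m * a * (1 - vs)) * N by ring.
have e2 : m * (2 * kappa * (1 - vs) * Nw) = 2 * m * kappa * (1 - vs) * Nw by ring.
rewrite e1 e2 in HN.
rewrite mulrC; lra.
Qed.

End G.

Section L.
Variable R : realType.

Lemma le_lim0 (x : R) (g : nat -> R) : g @ \oo --> 0 -> (forall s, x <= g s) -> x <= 0.
Proof.
move=> hg H.
have : x <= lim (g @ \oo) by apply: limr_ge; [exact: cvgP hg | near=> s; exact: H s].
by rewrite (cvg_lim _ hg).
Unshelve. all: by end_near.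
Qed.

Lemma geom_cvg (K q : R) : 0 <= q < 1 -> (fun s => K * q ^+ s / (1 - q)) @ \oo --> 0.
Proof.
move=> /andP[q0 q1].
have h : (fun s => K / (1 - q) * q ^+ s) @ \oo --> K / (1 - q) * 0.
  apply: cvgMl_tmp; apply: cvg_expr; rewrite ger0_norm //.
rewrite mulr0 in h; apply: cvg_trans h; apply: near_eq_cvg; near=> s.
by rewrite /= mulrAC.
Unshelve. all: by end_near.
Qed.

Lemma geom_limit (M : nat) (K q : R) (phi : nat -> grid R) :
  0 <= q < 1 -> 0 <= K ->
  (forall s, grid_periodic M (phi s)) ->
  (forall s i j, `|phi s.+1 i j - phi s i j| <= K * q ^+ s) ->
  exists phi1 : grid R, grid_periodic M phi1 /\
    forall s i j, `|phi s i j - phi1 i j| <= K * q ^+ s / (1 - q).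
Proof.
move=> /andP[q0 q1] K0 per H.
set r := fun s => K * q ^+ s / (1 - q).
have r0 s : 0 <= r s by rewrite /r divr_ge0 ?mulr_ge0 ?exprn_ge0 //; lra.
have rS s : r s - r s.+1 = K * q ^+ s.
  rewrite /r exprS; field; lra.
have bnd s i j : - (K * q ^+ s) <= phi s.+1 i j - phi s i j <= K * q ^+ s.
  by rewrite -ler_norml.
have rc : r @ \oo --> 0 by apply: geom_cvg; rewrite q0 q1.
pose a i j s := phi s i j + r s.
pose b i j s := phi s i j - r s.
have an i j : nonincreasing_seq (a i j).
  apply/nonincreasing_seqP => s; rewrite /a.
  have := bnd s i j; have := rS s; lra.
have bn i j : nondecreasing_seq (b i j).
  apply/nondecreasing_seqP => s; rewrite /b.
  have := bnd s i j; have := rS s; lra.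
have ba i j s t : b i j s <= a i j t.
  have [st|ts] := leqP s t.
    have := bn i j _ _ st; rewrite /b /a; have := r0 t; lra.
  have := an i j _ _ (ltnW ts); rewrite /b /a; have := r0 s; lra.
have ac i j : cvgn (a i j).
  apply: nonincreasing_is_cvgn; first exact: an.
  exists (b i j 0) => _ [s _ <-]; exact: ba.
exists (fun i j => limn (a i j)); split.
  move=> i j; split; congr (limn _); apply/funext => s; rewrite /a.
    by rewrite ((per s) i j).1.
  by rewrite ((per s) i j).2.
move=> s i j; rewrite ler_norml; apply/andP; split.
  have := nonincreasing_cvgn_ge (an i j) (ac i j) s; rewrite /a -/(r s); lra.
have : b i j s <= limn (a i j).
  apply: limr_ge; first exact: ac i j.
  by near=> t; exact: ba.
rewrite /b -/(r s); lra.
Unshelve. all: by end_near.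
Qed.

End L.


Unset Implicit Arguments. Set Strict Implicit.

Theorem mainTheorem8 (R : realType) (c : nonlin) (theta thetac beta : R)
    (L m eps alpha kappa tau1 : R) (M : nat) (phi0 : grid R) (phi : nat -> grid R) :
  let vs := alpha / 2 in
  let h := L / M%:R in
  0 < L -> (0 < M)%N -> 0 < m -> 0 < eps -> 0 < alpha -> alpha < 1 ->
  0 < tau1 -> 0 <= kappa ->
  nonlin_ok c theta thetac beta ->
  (forall x, -beta <= x <= beta -> `| dfnl c theta thetac x | <= kappa) ->
  grid_periodic M phi0 -> normInf M phi0 <= beta ->
  (forall s, grid_periodic M (phi s)) ->
  first_step_iter c theta thetac m eps alpha tau1 h kappa phi0 phi ->
  tau1 <= (4 / (11 * vs * m * (kappa + 4 * eps ^+ 2 / h ^+ 2) * Gamma (2 - alpha)))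
            `^ (1 / alpha) ->
  (forall s : nat, (1 <= s)%N -> normInf M (phi s) <= beta) /\
  (tau1 <= (4 / (11 * kappa * (1 - vs) * m * Gamma (2 - alpha))) `^ (1 / alpha) ->
   exists phi1 : grid R,
     [/\ grid_periodic M phi1,
         (fun s => normInf M (fun i j => phi s i j - phi1 i j)) @ \oo --> (0 : R),
         first_step_eq c theta thetac m eps alpha tau1 h phi0 phi1,
         normInf M phi1 <= beta &
         forall psi : grid R, grid_periodic M psi -> normInf M psi <= beta ->
           first_step_eq c theta thetac m eps alpha tau1 h phi0 psi -> psi = phi1]).
Proof.
move=> vs h HL HM Hm He Ha Ha1 Ht Hk ok hdf per0 n0 perp [p00 hit] Htau.
have vs0 : 0 < vs by rewrite /vs; lra.
have vs1 : vs < 1 by rewrite /vs; lra.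
have h0 : 0 < h by rewrite /h divr_gt0 // ltr0n.
have [b0 [fb fnb]] := fnl_beta ok.
set f := fnl c theta thetac.
have fl : forall a b, `|a| <= beta -> `|b| <= beta -> `|f a - f b| <= kappa * `|a - b|.
  by move=> a b ha hb; apply: (fnl_lip ok hdf); rewrite -ler_norml.
have G0 : 0 < Gamma (2 - alpha) by apply: Gamma_gt0; apply/andP; split; lra.
set a := eps ^+ 2 / h ^+ 2.
have a0 : 0 < a by rewrite /a divr_gt0 // exprn_gt0.
have e4 : 4 * eps ^+ 2 / h ^+ 2 = 4 * a by rewrite /a mulrA.
rewrite e4 in Htau.
set B := B10 alpha tau1.
have BE : B = (1 - vs) `^ (1 - alpha) / (Gamma (2 - alpha) * tau1 `^ alpha) by [].
have P2 := P_bound Ha Ha1.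
have P0 : 0 <= (1 - vs) `^ (1 - alpha) by apply: powR_ge0.
have hB : m * vs * (kappa + 4 * a) <= B.
  have D0 : 0 < 11 * vs * m * (kappa + 4 * a) * Gamma (2 - alpha).
    by rewrite !mulr_gt0 //; lra.
  have := tau_bound Ha Ht D0 G0 P0 Htau; rewrite -BE.
  have -> : (1 - vs) `^ (1 - alpha) * (11 * vs * m * (kappa + 4 * a) * Gamma (2 - alpha)) /
     (4 * Gamma (2 - alpha)) = (1 - vs) `^ (1 - alpha) * (m * vs * (kappa + 4 * a)) * (11 / 4).
    by field; rewrite gt_eqF.
  have Y0 : 0 <= m * vs * (kappa + 4 * a) by rewrite !mulr_ge0 //; lra.
  have : 1 / 2 * (m * vs * (kappa + 4 * a)) <= (1 - vs) `^ (1 - alpha) * (m * vs * (kappa + 4 * a)).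
    by apply: ler_wpM2r.
  lra.
have B0 : 0 < B.
  apply: lt_le_trans hB; rewrite !mulr_gt0 //; lra.
have st : forall s, stepeq B m eps h kappa vs f phi0 (phi s.+1) (phi s).
  by move=> s i j; exact: (hit s.+1 i j erefl).
have bz : forall i j, `|phi0 i j| <= beta.
  by move=> i j; apply: le_trans n0; exact: normInf_ge.
have bnd : forall s, normInf M (phi s) <= beta /\ forall i j, `|phi s i j| <= beta.
  elim=> [|s [IH1 IH2]]; first by rewrite p00; split.
  have H1 : normInf M (phi s.+1) <= beta.
    exact: (grid_bound HM Hm h0 Hk vs0 vs1 (ltW b0) B0 hB fl fb fnb (perp _) bz IH2 (st s)).
  split => // i j; apply: le_trans H1; exact: normInf_ge.
split; first by move=> s _; exact: (bnd s).1.
move=> Htau2.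
have k0 : 0 < kappa.
  rewrite lt_neqAle Hk andbT; apply/eqP => k0.
  move: Htau2; rewrite -k0 !mulr0 !mul0r invr0 mulr0 powR0; first lra.
  by rewrite gt_eqF // divr_gt0.
have hB2 : 11 / 8 * (m * (1 - vs) * kappa) <= B.
  have D0 : 0 < 11 * kappa * (1 - vs) * m * Gamma (2 - alpha).
    by rewrite !mulr_gt0 //; lra.
  have := tau_bound Ha Ht D0 G0 P0 Htau2; rewrite -BE.
  have -> : (1 - vs) `^ (1 - alpha) * (11 * kappa * (1 - vs) * m * Gamma (2 - alpha)) /
     (4 * Gamma (2 - alpha)) = (1 - vs) `^ (1 - alpha) * (m * (1 - vs) * kappa) * (11 / 4).
    by field; rewrite gt_eqF.
  have Y0 : 0 <= m * (1 - vs) * kappa by rewrite !mulr_ge0 //; lra.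
  have : 1 / 2 * (m * (1 - vs) * kappa) <= (1 - vs) `^ (1 - alpha) * (m * (1 - vs) * kappa).
    by apply: ler_wpM2r.
  lra.
have Y0 : 0 < m * (1 - vs) * kappa by rewrite !mulr_gt0 //; lra.
set X := B + m * (1 - vs) * kappa.
have X0 : 0 < X by rewrite /X; lra.
set q := 2 * m * kappa * (1 - vs) / X.
have q0 : 0 <= q by rewrite /q divr_ge0 ?mulr_ge0 //; [lra|lra|exact: ltW].
have q1 : q < 1.
  rewrite /q ltr_pdivrMr // mul1r /X.
  have -> : 2 * m * kappa * (1 - vs) = 2 * (m * (1 - vs) * kappa) by ring.
  lra.
set d := fun s => normInf M (fun i j => phi s.+1 i j - phi s i j).
have dc : forall s, d s.+1 <= q * d s.
  move=> s.
  have := grid_contr HM Hm h0 Hk vs0 vs1 B0 fl (perp _) (perp _) (perp _) (perp _)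
    (bnd s.+1).2 (bnd s).2 bz (st s.+1) (st s).
  rewrite -/X -/(d s.+1) -/(d s) => H.
  rewrite /q mulrAC ler_pdivlMr // mulrC; exact: H.
set K := d 0%N.
have K0 : 0 <= K := normInf_ge0 _ _.
have dK : forall s, d s <= K * q ^+ s.
  elim=> [|s IH]; first by rewrite expr0 mulr1.
  apply: le_trans (dc s) _; rewrite exprS mulrCA; exact: ler_wpM2l.
have pK : forall s i j, `|phi s.+1 i j - phi s i j| <= K * q ^+ s.
  move=> s i j; apply: le_trans (dK s).
  exact: (normInf_ge (per_sub (perp _) (perp _)) HM).
have [phi1 [per1 est]] := geom_limit (M := M) (ltac:(by rewrite q0 q1) : 0 <= q < 1) K0 perp pK.
set r := fun s => K * q ^+ s / (1 - q).
have r0 s : 0 <= r s by rewrite /r divr_ge0 ?mulr_ge0 ?exprn_ge0 //; lra.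
have rc : r @ \oo --> 0 by apply: geom_cvg; rewrite q0 q1.
have rdec s : r s.+1 <= r s.
  rewrite /r ler_pM2r ?invr_gt0 ?subr_gt0 // exprS mulrCA.
  apply: ler_piMl; [by rewrite mulr_ge0 ?exprn_ge0 | exact: ltW].
have b1 : forall i j, `|phi1 i j| <= beta.
  move=> i j.
  suff : `|phi1 i j| - beta <= 0 by lra.
  apply: (le_lim0 rc) => s.
  have := est s i j; have := (bnd s).2 i j.
  have := ler_distD (phi s i j) (phi1 i j) 0.
  rewrite !subr0 (distrC (phi1 i j)) -/(r s); lra.
have hr1 : forall s i j, `|phi1 i j - phi s.+1 i j| <= r s.
  by move=> s i j; rewrite distrC; apply: le_trans (est s.+1 i j) (rdec s).
have hr0 : forall s i j, `|phi1 i j - phi s i j| <= r s.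
  by move=> s i j; rewrite distrC; exact: (est s i j).
have hn0 : h != 0 by rewrite gt_eqF.
have A0 : 0 <= m * a * (1 - vs) by apply: mulr_ge0; [apply: mulr_ge0; apply: ltW | lra].
have C0 : 0 <= m * kappa * (1 - vs) by apply: mulr_ge0; [apply: mulr_ge0 => //; apply: ltW | lra].
set Dc := B + 8 * (m * a * (1 - vs)) + 4 * (m * kappa * (1 - vs)).
have gc : (fun s => Dc * r s) @ \oo --> 0.
  rewrite -(mulr0 Dc); exact: (cvgMl_tmp (a := Dc) rc).
have eq1 : first_step_eq c theta thetac m eps alpha tau1 h phi0 phi1.
  move=> i j /=.
  apply/eqP; rewrite -subr_eq0 -normr_le0.
  apply: (le_lim0 gc) => s.
  have E := stepeq_form i j hn0 (st s).
  have hV : `|phi s.+1 i j - phi s i j| <= r s + r s.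
    have := ler_distD (phi1 i j) (phi s.+1 i j) (phi s i j).
    rewrite (distrC (phi s.+1 i j) (phi1 i j)); have := hr1 s i j; have := hr0 s i j; lra.
  have hF : `|f ((1 - vs) * phi1 i j + vs * phi0 i j) - f ((1 - vs) * phi s i j + vs * phi0 i j)|
      <= kappa * (1 - vs) * r s.
    apply: le_trans (fl _ _ (Qbound vs0 vs1 (b1 i j) (bz i j)) (Qbound vs0 vs1 ((bnd s).2 i j) (bz i j))) _.
    rewrite (_ : _ - _ = (1 - vs) * (phi1 i j - phi s i j)); last ring.
    rewrite normrM ger0_norm; last lra.
    rewrite -mulrA; apply: ler_wpM2l => //; apply: ler_wpM2l; [lra | exact: hr0].
  have R1 := resid Hm (ltW a0) Hk vs0 vs1 (ltW B0) (hr1 s i j) (hr1 s _ _) (hr1 s _ _) (hr1 s _ _) (hr1 s _ _) hV hF E.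
  have -> : B10 alpha tau1 * (phi1 i j - phi0 i j) -
     m * (eps ^+ 2 * lap h (fun i0 j0 => (1 - alpha / 2) * phi1 i0 j0 + alpha / 2 * phi0 i0 j0) i j +
          fnl c theta thetac ((1 - alpha / 2) * phi1 i j + alpha / 2 * phi0 i j)) =
     B * (phi1 i j - phi0 i j) - m * (a * ((1 - vs) * phi1 (i + 1)%R j + vs * phi0 (i + 1)%R j
       + ((1 - vs) * phi1 (i - 1)%R j + vs * phi0 (i - 1)%R j)
       + ((1 - vs) * phi1 i (j + 1)%R + vs * phi0 i (j + 1)%R)
       + ((1 - vs) * phi1 i (j - 1)%R + vs * phi0 i (j - 1)%R)
       - 4 * ((1 - vs) * phi1 i j + vs * phi0 i j)) + f ((1 - vs) * phi1 i j + vs * phi0 i j)).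
    rewrite /lap /a /B /vs /f; field; by [].
  apply: le_trans R1 _.
  have rr := r0 s.
  have : 2 * (m * kappa * (1 - vs)) * (r s + r s) = 4 * (m * kappa * (1 - vs)) * r s by ring.
  rewrite /Dc !mulrDl; lra.
have nb1 : normInf M phi1 <= beta by apply: normInf_le => //; exact: ltW.
exists phi1; split => //.
- apply: (@squeeze_cvgr _ _ _ _ (fun _ => 0) r).
  + near=> s; apply/andP; split; first exact: normInf_ge0.
    by apply: normInf_le => // i j; exact: (est s i j).
  + exact: cvg_cst.
  + exact: rc.
- move=> psi ppsi npsi epsi.
  have bpsi : forall i j, `|psi i j| <= beta.
    by move=> i j; apply: le_trans npsi; exact: normInf_ge.
  have sq : forall u, first_step_eq c theta thetac m eps alpha tau1 h phi0 u ->
      stepeq B m eps h kappa vs f phi0 u u.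
    by move=> u eu i j; rewrite subrr mulr0 subr0; exact: (eu i j).
  have := grid_contr HM Hm h0 Hk vs0 vs1 B0 fl ppsi per1 ppsi per1
    bpsi b1 bz (sq _ epsi) (sq _ eq1).
  rewrite -/X => H.
  set N := normInf M _ in H.
  have N0 : 0 <= N := normInf_ge0 _ _.
  have NX : N <= 0.
    have : (X - 2 * m * kappa * (1 - vs)) * N <= 0 by rewrite mulrBl; lra.
    have hX : 0 < X - 2 * m * kappa * (1 - vs).
      rewrite /X; have -> : 2 * m * kappa * (1 - vs) = 2 * (m * (1 - vs) * kappa) by ring.
      lra.
    by rewrite pmulr_rle0.
  apply/funext => i; apply/funext => j.
  have := normInf_ge (per_sub ppsi per1) HM i j; rewrite -/N => hh.
  by apply/eqP; rewrite -subr_eq0 -normr_le0; lra.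
Unshelve. all: by end_near.
Qed.
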